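(* Let $\Sigma=(X,\mathcal U,\phi)$ be a forward complete control system which has the CEP property. If $\Sigma$ is norm-to-integral ISS, then $\Sigma$ is uniformly locally stable (ULS).
   Context: Let $X$, $U$ be Banach spaces and let $\mathcal U$ be a normed vector space of functions $\mathbb R_+\to U$ satisfying: (shift invariance) for all $u\in\mathcal U$ and $\tau\ge0$, $u(\cdot+\tau)\in\mathcal U$ and $\|u(\cdot+\tau)\|_{\mathcal U}\le\|u\|_{\mathcal U}$; (concatenation) for all $u_1,u_2\in\mathcal U$ and $t>0$ the function equal to $u_1(\tau)$ for $\tau\in[0,t]$ and to $u_2(\tau-t)$ for $\tau>t$ belongs to $\mathcal U$. A forward complete control system is a triple $\Sigma=(X,\mathcal U,\phi)$ with $\phi:\mathbb R_+\times X\times\mathcal U\to X$ such that: $\phi(0,x,u)=x$; (causality) $\phi(t,x,u)=\phi(t,x,\tilde u)$ whenever $u|_{[0,t]}=\tilde u|_{[0,t]}$; for each $(x,u)$ the map $t\mapsto\phi(t,x,u)$ is continuous; (cocycle) $\phi(h,\phi(t,x,u),u(t+\cdot))=\phi(t+h,x,u)$ for all $t,h\ge0$, $x\in X$, $u\in\mathcal U$. Comparison functions: $\mathcal K$ = continuous strictly increasing $\gamma:\mathbb R_+\to\mathbb R_+$ with $\gamma(0)=0$; $\mathcal K_\infty$ = unbounded functions in $\mathcal K$. $\Sigma$ has the CEP property (continuity at the equilibrium point) if $\phi(t,0,0)=0$ for all $t\ge0$ and for every $\varepsilon>0$ and $h>0$ there is $\delta>0$ such that $t\in[0,h]$, $\|x\|_X\le\delta$,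 $\|u\|_{\mathcal U}\le\delta$ imply $\|\phi(t,x,u)\|_X\le\varepsilon$. $\Sigma$ is ULS if there exist $\sigma,\gamma\in\mathcal K_\infty$ and $r>0$ such that $\|\phi(t,x,u)\|_X\le\sigma(\|x\|_X)+\gamma(\|u\|_{\mathcal U})$ for all $t\ge0$, all $\|x\|_X\le r$ and all $\|u\|_{\mathcal U}\le r$. $\Sigma$ is norm-to-integral ISS if there are $\alpha\in\mathcal K$, $\psi,\sigma\in\mathcal K_\infty$ with $\int_0^t\alpha(\|\phi(s,x,u)\|_X)\,ds\le\psi(\|x\|_X)+t\,\sigma(\|u\|_{\mathcal U})$ for all $x\in X$, $u\in\mathcal U$, $t\ge0$. *)

(* Defs.v *)
From Stdlib Require Import Reals Lra.
Open Scope R_scope.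
Set Implicit Arguments.

Record NormedSpace : Type := {
  carrier :> Type;
  vzero : carrier;
  vadd : carrier -> carrier -> carrier;
  vopp : carrier -> carrier;
  vscal : R -> carrier -> carrier;
  vnorm : carrier -> R;
  vadd_assoc : forall x y z, vadd x (vadd y z) = vadd (vadd x y) z;
  vadd_comm : forall x y, vadd x y = vadd y x;
  vadd_0 : forall x, vadd x vzero = x;
  vadd_opp : forall x, vadd x (vopp x) = vzero;
  vscal_1 : forall x, vscal 1 x = x;
  vscal_assoc : forall a b x, vscal a (vscal b x) = vscal (a * b) x;
  vscal_distr_v : forall a x y, vscal a (vadd x y) = vadd (vscal a x) (vscal a y);
  vscal_distr_r : forall a b x, vscal (a + b) x = vadd (vscal a x) (vscal b x);
  vnorm_nonneg : forall x, 0 <= vnorm x;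
  vnorm_eq0 : forall x, vnorm x = 0 -> x = vzero;
  vnorm_scal : forall a x, vnorm (vscal a x) = Rabs a * vnorm x;
  vnorm_triangle : forall x y, vnorm (vadd x y) <= vnorm x + vnorm y
}.

Arguments vzero {_}.
Arguments vadd {_}.
Arguments vopp {_}.
Arguments vscal {_}.
Arguments vnorm {_}.

Definition vsub {V : NormedSpace} (x y : V) : V := vadd x (vopp y).

Definition complete (V : NormedSpace) : Prop :=
  forall s : nat -> V,
    (forall eps, 0 < eps -> exists N, forall m n, (N <= m)%nat -> (N <= n)%nat ->
        vnorm (vsub (s m) (s n)) < eps) ->
    exists l : V, forall eps, 0 < eps -> exists N, forall n, (N <= n)%nat ->
        vnorm (vsub (s n) l) < eps.

Definition Banach (V : NormedSpace) : Prop := complete V.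

(** Elements of [Uc] are identified with functions via [ev]; [ev] is linear
    (the vector operations are pointwise) and injective on R_+. *)
Definition function_space {U Uc : NormedSpace} (ev : Uc -> R -> U) : Prop :=
  (forall s, 0 <= s -> ev vzero s = vzero) /\
  (forall u v s, 0 <= s -> ev (vadd u v) s = vadd (ev u s) (ev v s)) /\
  (forall a u s, 0 <= s -> ev (vscal a u) s = vscal a (ev u s)) /\
  (forall u v, (forall s, 0 <= s -> ev u s = ev v s) -> u = v).

Definition shift_invariant {U Uc : NormedSpace} (ev : Uc -> R -> U) : Prop :=
  forall (u : Uc) (tau : R), 0 <= tau ->
    exists v : Uc, (forall s, 0 <= s -> ev v s = ev u (s + tau)) /\ vnorm v <= vnorm u.

Definition concatenation_closed {U Uc : NormedSpace} (ev : Uc -> R -> U) : Prop :=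
  forall (u1 u2 : Uc) (t : R), 0 < t ->
    exists w : Uc, (forall s, 0 <= s <= t -> ev w s = ev u1 s) /\
                   (forall s, t < s -> ev w s = ev u2 (s - t)).

Definition input_space {U Uc : NormedSpace} (ev : Uc -> R -> U) : Prop :=
  function_space ev /\ shift_invariant ev /\ concatenation_closed ev.

Definition control_system {X U Uc : NormedSpace} (ev : Uc -> R -> U)
    (phi : R -> X -> Uc -> X) : Prop :=
  (forall x u, phi 0 x u = x) /\
  (forall t x (u u' : Uc), 0 <= t ->
     (forall s, 0 <= s <= t -> ev u s = ev u' s) -> phi t x u = phi t x u') /\
  (forall x u t, 0 <= t -> forall eps, 0 < eps -> exists delta, 0 < delta /\
     forall s, 0 <= s -> Rabs (s - t) < delta -> vnorm (vsub (phi s x u) (phi t x u)) < eps) /\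
  (forall t h x (u v : Uc), 0 <= t -> 0 <= h ->
     (forall s, 0 <= s -> ev v s = ev u (s + t)) ->
     phi h (phi t x u) v = phi (t + h) x u).

(** * Comparison functions (as functions on R, only values on R_+ matter) *)
Definition class_K (g : R -> R) : Prop :=
  (forall t, 0 <= t -> forall eps, 0 < eps -> exists delta, 0 < delta /\
     forall s, 0 <= s -> Rabs (s - t) < delta -> Rabs (g s - g t) < eps) /\
  (forall s t, 0 <= s -> s < t -> g s < g t) /\
  g 0 = 0.

Definition class_Kinf (g : R -> R) : Prop :=
  class_K g /\ forall M, exists s, 0 <= s /\ M < g s.

Definition CEP {X Uc : NormedSpace} (phi : R -> X -> Uc -> X) : Prop :=
  (forall t, 0 <= t -> phi t vzero vzero = vzero) /\
  (forall eps h, 0 < eps -> 0 < h -> exists delta, 0 < delta /\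
     forall t x u, 0 <= t <= h -> vnorm x <= delta -> vnorm u <= delta ->
       vnorm (phi t x u) <= eps).

Definition ULS {X Uc : NormedSpace} (phi : R -> X -> Uc -> X) : Prop :=
  exists sigma gamma r, class_Kinf sigma /\ class_Kinf gamma /\ 0 < r /\
    forall t x u, 0 <= t -> vnorm x <= r -> vnorm u <= r ->
      vnorm (phi t x u) <= sigma (vnorm x) + gamma (vnorm u).

(** norm-to-integral ISS; the integrand s |-> alpha (||phi s x u||) is
    continuous on [0,t], hence Riemann integrable; the bound is required for
    every integrability proof (RiemannInt does not depend on it). *)
Definition norm_to_integral_ISS {X Uc : NormedSpace} (phi : R -> X -> Uc -> X) : Prop :=
  exists alpha psi sigma, class_K alpha /\ class_Kinf psi /\ class_Kinf sigma /\
    forall x u t, 0 <= t ->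
      forall pr : Riemann_integrable (fun s => alpha (vnorm (phi s x u))) 0 t,
        RiemannInt pr <= psi (vnorm x) + t * sigma (vnorm u).

(* Main.v *)
Require Import Defs.
From Stdlib Require Import Reals Lra Classical ClassicalEpsilon.
Open Scope R_scope.

Lemma vscal0 (V : NormedSpace) (x : V) : vscal 0 x = vzero.
Proof.
  set (a := vscal 0 x).
  assert (Ha : a = vadd a a) by (unfold a; rewrite <- vscal_distr_r; f_equal; ring).
  rewrite <- (vadd_opp _ a). rewrite Ha at 2.
  rewrite <- vadd_assoc, vadd_opp, vadd_0. reflexivity.
Qed.

Lemma vopp_scal (V : NormedSpace) (x : V) : vopp x = vscal (-1) x.
Proof.
  assert (H : vadd x (vscal (-1) x) = vzero).
  { rewrite <- (vscal_1 _ x) at 1. rewrite <- vscal_distr_r.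
    replace (1 + -1) with 0 by ring. apply vscal0. }
  rewrite <- (vadd_0 _ (vopp x)). rewrite <- H.
  rewrite vadd_assoc. rewrite (vadd_comm _ (vopp x) x), vadd_opp.
  rewrite vadd_comm, vadd_0. reflexivity.
Qed.

Lemma vsub_sym (V : NormedSpace) (a b : V) : vnorm (vsub b a) = vnorm (vsub a b).
Proof.
  unfold vsub. rewrite !vopp_scal.
  replace (vadd b (vscal (-1) a)) with (vscal (-1) (vadd a (vscal (-1) b))).
  - rewrite vnorm_scal. assert (Hm : Rabs (-1) = 1) by (unfold Rabs; destruct (Rcase_abs (-1)); lra). rewrite Hm. ring.
  - rewrite vscal_distr_v, vscal_assoc. replace (-1 * -1) with 1 by ring.
    rewrite vscal_1, vadd_comm. reflexivity.
Qed.

Lemma vnorm_le (V : NormedSpace) (a b : V) : vnorm a <= vnorm (vsub a b) + vnorm b.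
Proof.
  replace a with (vadd (vsub a b) b) at 1.
  - apply vnorm_triangle.
  - unfold vsub. rewrite <- vadd_assoc, (vadd_comm _ (vopp b) b), vadd_opp, vadd_0.
    reflexivity.
Qed.

Lemma norm_dist (V : NormedSpace) (a b : V) :
  Rabs (vnorm a - vnorm b) <= vnorm (vsub a b).
Proof.
  pose proof (vnorm_le _ a b). pose proof (vnorm_le _ b a). rewrite vsub_sym in H0.
  unfold Rabs; destruct (Rcase_abs _); lra.
Qed.

Lemma cont_pt_of (f : R -> R) (x : R) :
  (forall eps, 0 < eps -> exists d, 0 < d /\ forall y, Rabs (y - x) < d -> Rabs (f y - f x) < eps) ->
  continuity_pt f x.
Proof.
  intros H eps Heps. destruct (H eps Heps) as [d [Hd Hy]].
  exists d. split; [exact Hd|]. intros y [_ Hy']. apply Hy. exact Hy'.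
Qed.

Lemma Rmax0_lip (z y : R) : Rabs (Rmax 0 z - Rmax 0 y) <= Rabs (z - y).
Proof.
  unfold Rmax; destruct (Rle_dec 0 z); destruct (Rle_dec 0 y);
  unfold Rabs; repeat destruct (Rcase_abs _); lra.
Qed.

Lemma classK_mono g : class_K g -> forall s t, 0 <= s -> s <= t -> g s <= g t.
Proof.
  intros [_ [Hm _]] s t Hs Hst. destruct (Req_dec s t) as [->|Hne]; [lra|].
  left. apply Hm; lra.
Qed.

Lemma classK_nonneg g : class_K g -> forall s, 0 <= s -> 0 <= g s.
Proof.
  intros HK s Hs. pose proof (classK_mono _ HK 0 s (Rle_refl 0) Hs).
  destruct HK as [_ [_ H0]]. lra.
Qed.

Lemma classK_pos g : class_K g -> forall s, 0 < s -> 0 < g s.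
Proof.
  intros HK s Hs. destruct HK as [_ [Hm H0]]. rewrite <- H0. apply Hm; lra.
Qed.

Lemma classK_small g : class_K g -> forall e, 0 < e -> exists d, 0 < d /\
  forall s, 0 <= s <= d -> g s < e.
Proof.
  intros HK e He. destruct HK as [Hc [_ H0]].
  destruct (Hc 0 (Rle_refl 0) e He) as [d [Hd H]].
  exists (d/2). split; [lra|]. intros s Hs.
  specialize (H s (proj1 Hs)). rewrite H0 in H.
  assert (Rabs (s - 0) < d) by (rewrite Rminus_0_r, Rabs_pos_eq; lra).
  specialize (H H1). rewrite Rminus_0_r in H. apply Rabs_def2 in H. lra.
Qed.

Lemma last_time (f : R -> R) a b c : a <= b -> f a <= c ->
  (forall t, a <= t <= b -> forall eps, 0 < eps -> exists d, 0 < d /\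
     forall s, a <= s <= b -> Rabs (s - t) < d -> Rabs (f s - f t) < eps) ->
  exists s0, a <= s0 <= b /\ f s0 <= c /\ forall r, s0 < r <= b -> c < f r.
Proof.
  intros Hab Ha Hc.
  set (E := fun y => a <= y <= b /\ f y <= c).
  assert (Hb : bound E) by (exists b; intros y [Hy _]; lra).
  assert (Hne : exists y, E y) by (exists a; split; [lra|exact Ha]).
  destruct (completeness E Hb Hne) as [m [Hub Hlub]].
  assert (Ham : a <= m) by (apply Hub; split; [lra|exact Ha]).
  assert (Hmb : m <= b) by (apply Hlub; intros y [Hy _]; lra).
  exists m. split; [lra|]. split.
  - destruct (Rle_dec (f m) c) as [Hle|Hgt]; [exact Hle|exfalso].
    apply Rnot_le_lt in Hgt.
    destruct (Hc m (conj Ham Hmb) (f m - c)) as [d [Hd Hs]]; [lra|].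
    assert (Hex : exists y, E y /\ m - d < y).
    { apply NNPP. intro Hn. assert (m <= m - d); [|lra].
      apply Hlub. intros y Hy. apply Rnot_lt_le. intro Hlt. apply Hn. exists y. auto. }
    destruct Hex as [y [[Hy1 Hy2] Hy3]].
    assert (y <= m) by (apply Hub; split; auto).
    specialize (Hs y Hy1). assert (Rabs (y - m) < d) by (apply Rabs_def1; lra).
    specialize (Hs H0). apply Rabs_def2 in Hs. lra.
  - intros r Hr. apply Rnot_le_lt. intro Hle.
    assert (r <= m) by (apply Hub; split; [lra|exact Hle]). lra.
Qed.

Definition traj_cont {X Uc : NormedSpace} (phi : R -> X -> Uc -> X) : Prop :=
  forall x u t, 0 <= t -> forall eps, 0 < eps -> exists delta, 0 < delta /\
     forall s, 0 <= s -> Rabs (s - t) < delta -> vnorm (vsub (phi s x u) (phi t x u)) < eps.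

Lemma F_cont {X Uc : NormedSpace} (phi : R -> X -> Uc -> X) (Hc : traj_cont phi) x u a b :
  0 <= a ->
  forall t, a <= t <= b -> forall eps, 0 < eps -> exists d, 0 < d /\
     forall s, a <= s <= b -> Rabs (s - t) < d ->
       Rabs (vnorm (phi s x u) - vnorm (phi t x u)) < eps.
Proof.
  intros Ha t Ht eps He. destruct (Hc x u t ltac:(lra) eps He) as [d [Hd H]].
  exists d. split; [exact Hd|]. intros s Hs Hst.
  eapply Rle_lt_trans; [apply norm_dist|]. apply H; [lra|exact Hst].
Qed.

Lemma integ {X Uc : NormedSpace} (phi : R -> X -> Uc -> X) (Hc : traj_cont phi)
  alpha (Ka : class_K alpha) x u a b : 0 <= a <= b ->
  Riemann_integrable (fun s => alpha (vnorm (phi s x u))) a b.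
Proof.
  intros Hab.
  apply Riemann_integrable_ext with (f := fun s => alpha (vnorm (phi (Rmax 0 s) x u))).
  { intros y Hy. rewrite Rmin_left in Hy by lra. rewrite Rmax_right in Hy by lra.
    rewrite Rmax_right by lra. reflexivity. }
  apply continuity_implies_RiemannInt; [lra|].
  intros y _. apply cont_pt_of. intros eps He.
  destruct Ka as [Kc _].
  destruct (Kc (vnorm (phi (Rmax 0 y) x u)) (vnorm_nonneg _ _) eps He) as [d1 [Hd1 H1]].
  destruct (Hc x u (Rmax 0 y) (Rmax_l 0 y) d1 Hd1) as [d2 [Hd2 H2]].
  exists d2. split; [exact Hd2|]. intros z Hz.
  apply H1; [apply vnorm_nonneg|].
  eapply Rle_lt_trans; [apply norm_dist|]. apply H2; [apply Rmax_l|].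
  eapply Rle_lt_trans; [apply Rmax0_lip|exact Hz].
Qed.

Lemma stability {X U Uc : NormedSpace} (ev : Uc -> R -> U) (phi : R -> X -> Uc -> X) :
  shift_invariant ev -> traj_cont phi ->
  (forall x u, phi 0 x u = x) ->
  (forall t h x (u v : Uc), 0 <= t -> 0 <= h ->
     (forall s, 0 <= s -> ev v s = ev u (s + t)) ->
     phi h (phi t x u) v = phi (t + h) x u) ->
  (forall eps h, 0 < eps -> 0 < h -> exists delta, 0 < delta /\
     forall t x u, 0 <= t <= h -> vnorm x <= delta -> vnorm u <= delta ->
       vnorm (phi t x u) <= eps) ->
  norm_to_integral_ISS phi ->
  forall eps, 0 < eps -> exists delta, 0 < delta /\ forall t x u, 0 <= t ->
    vnorm x <= delta -> vnorm u <= delta -> vnorm (phi t x u) <= eps.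
Proof.
  intros SI Hc Hid Hcoc Hcep [alpha [psi [sigma [Ka [[Kp _] [[Ks _] Hiss]]]]]] eps He.
  destruct (Hcep eps 1 He Rlt_0_1) as [eta [Heta Hce]].
  pose proof (classK_pos _ Ka eta Heta) as HA.
  destruct (classK_small _ Ka (alpha eta / 2)) as [d1 [Hd1 H1]]; [lra|].
  destruct (classK_small _ Kp (alpha eta / 2)) as [d2 [Hd2 H2]]; [lra|].
  set (del := Rmin eta (Rmin d1 d2)).
  assert (Hdel : 0 < del) by (unfold del; repeat apply Rmin_glb_lt; lra).
  assert (Hde : del <= eta) by apply Rmin_l.
  assert (Hd1' : del <= d1) by (unfold del; eapply Rle_trans; [apply Rmin_r|apply Rmin_l]).
  assert (Hd2' : del <= d2) by (unfold del; eapply Rle_trans; [apply Rmin_r|apply Rmin_r]).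
  pose proof (classK_pos _ Ka del Hdel) as Had.
  assert (Had2 : alpha del < alpha eta / 2) by (apply H1; lra).
  assert (Hpd2 : psi del < alpha eta / 2) by (apply H2; lra).
  destruct (classK_small _ Ks (alpha del) Had) as [d3 [Hd3 H3]].
  exists (Rmin del d3). split; [apply Rmin_glb_lt; lra|].
  intros t x u Ht Hx Hu.
  assert (Hx' : vnorm x <= del) by (eapply Rle_trans; [exact Hx|apply Rmin_l]).
  assert (Hu' : vnorm u <= d3) by (eapply Rle_trans; [exact Hu|apply Rmin_r]).
  assert (Hu'' : vnorm u <= eta) by (eapply Rle_trans; [exact Hu|]; eapply Rle_trans; [apply Rmin_l|exact Hde]).
  apply Rnot_lt_le; intro Hgt.
  set (F := fun s => vnorm (phi s x u)).
  assert (HF0 : F 0 = vnorm x) by (unfold F; rewrite Hid; reflexivity).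
  destruct (last_time F 0 t del Ht ltac:(lra) (F_cont phi Hc x u 0 t (Rle_refl 0)))
    as [sa [Hsa1 [Hsa2 Hsa3]]].
  destruct (last_time F 0 t eta Ht ltac:(lra) (F_cont phi Hc x u 0 t (Rle_refl 0)))
    as [sb [Hsb1 [Hsb2 Hsb3]]].
  assert (Hsb : 1 < t - sb).
  { apply Rnot_le_lt; intro Hle.
    destruct (SI u sb (proj1 Hsb1)) as [w [Hw1 Hw2]].
    pose proof (Hcoc sb (t - sb) x u w (proj1 Hsb1) ltac:(lra) Hw1) as Heq.
    replace (sb + (t - sb)) with t in Heq by ring.
    pose proof (Hce (t - sb) (phi sb x u) w ltac:(lra) Hsb2 ltac:(lra)) as Hb.
    rewrite Heq in Hb. lra. }
  assert (Hab : sa <= sb).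
  { apply Rnot_lt_le; intro Hlt. pose proof (Hsb3 sa (conj Hlt (proj2 Hsa1))). lra. }
  set (T := t - sa).
  destruct (SI u sa (proj1 Hsa1)) as [v [Hv1 Hv2]].
  set (y := phi sa x u).
  assert (Heq : forall h, 0 <= h -> alpha (vnorm (phi h y v)) = alpha (F (sa + h))).
  { intros h Hh. unfold y, F. rewrite Hcoc; auto. lra. }
  pose proof (integ phi Hc alpha Ka y v 0 T ltac:(unfold T; lra)) as pr3.
  pose proof (integ phi Hc alpha Ka y v 0 (T - 1) ltac:(unfold T; lra)) as pr1.
  pose proof (integ phi Hc alpha Ka y v (T - 1) T ltac:(unfold T; lra)) as pr2.
  pose proof (Hiss y v T ltac:(unfold T; lra) pr3) as Hup.
  assert (Hpsi : psi (vnorm y) <= psi del) by (apply (classK_mono _ Kp); [apply vnorm_nonneg|exact Hsa2]).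
  assert (Hsig : sigma (vnorm v) < alpha del) by (apply H3; split; [apply vnorm_nonneg|lra]).
  assert (HTs : T * sigma (vnorm v) <= T * alpha del) by (apply Rmult_le_compat_l; unfold T; lra).
  assert (Hlow1 : alpha del * (T - 1 - 0) <= RiemannInt pr1).
  { rewrite <- (RiemannInt_P15 (RiemannInt_P14 0 (T - 1) (alpha del))).
    apply RiemannInt_P19; [unfold T; lra|].
    intros h Hh. unfold fct_cte. rewrite Heq by lra.
    apply (classK_mono _ Ka); [lra|]. left. apply Hsa3. unfold T in Hh. lra. }
  assert (Hlow2 : alpha eta * (T - (T - 1)) <= RiemannInt pr2).
  { rewrite <- (RiemannInt_P15 (RiemannInt_P14 (T - 1) T (alpha eta))).
    apply RiemannInt_P19; [lra|].
    intros h Hh. unfold fct_cte. rewrite Heq by (unfold T in Hh; lra).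
    apply (classK_mono _ Ka); [lra|]. left. apply Hsb3. unfold T in Hh. lra. }
  pose proof (RiemannInt_P26 pr1 pr2 pr3) as Hsplit.
  lra.
Qed.

Definition term (dd : nat -> R) (m : nat) (s : R) := / (INR m + 1) + Rabs s / dd m.

Lemma term_pos dd m s : (forall m, 0 < dd m) -> 0 < term dd m s.
Proof.
  intros H. unfold term. pose proof (pos_INR m). pose proof (H m).
  assert (0 < / (INR m + 1)) by (apply Rinv_0_lt_compat; lra).
  assert (0 <= Rabs s / dd m) by (apply Rmult_le_pos; [apply Rabs_pos|left; apply Rinv_0_lt_compat; lra]).
  lra.
Qed.

Lemma inf_fun (dd : nat -> R) (Hdd : forall m, 0 < dd m) : exists g : R -> R,
  (forall s m, g s <= term dd m s) /\
  (forall s e, (forall m, e <= term dd m s) -> e <= g s).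
Proof.
  set (E := fun s y => exists m, y = - term dd m s).
  assert (H : forall s, {l | is_lub (E s) l}).
  { intro s. apply completeness.
    - exists 0. intros y [m Hm]; rewrite Hm. pose proof (term_pos dd m s Hdd). lra.
    - exists (- term dd 0 s). exists 0%nat. reflexivity. }
  exists (fun s => - proj1_sig (H s)). split.
  - intros s m. simpl; pose proof (proj2_sig (H s)) as [Hub _]; set (l := proj1_sig (H s)) in *.
    assert (- term dd m s <= l) by (apply Hub; exists m; reflexivity). lra.
  - intros s e He. simpl; pose proof (proj2_sig (H s)) as [_ Hl]; set (l := proj1_sig (H s)) in *.
    assert (l <= - e); [|lra]. apply Hl. intros y [m Hm]; rewrite Hm. specialize (He m). lra.
Qed.

Lemma term_mono dd m s s' : (forall m, 0 < dd m) -> 0 <= s <= s' -> term dd m s <= term dd m s'.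
Proof.
  intros H Hs. unfold term. rewrite !Rabs_pos_eq by lra.
  pose proof (H m). apply Rplus_le_compat_l. apply Rmult_le_compat_r; [left; apply Rinv_0_lt_compat; lra| lra].
Qed.


Lemma g_props (dd : nat -> R) (Hdd : forall m, 0 < dd m) (g : R -> R)
  (G1 : forall s m, g s <= term dd m s)
  (G2 : forall s e, (forall m, e <= term dd m s) -> e <= g s) :
  (forall s, 0 <= g s) /\ g 0 = 0 /\
  (forall s s', 0 <= s <= s' -> g s <= g s') /\
  (forall s s', 0 < s <= s' -> s * g s' <= s' * g s) /\
  (forall s e, g s < e -> exists m, term dd m s < e).
Proof.
  assert (Hnn : forall s, 0 <= g s) by (intro s; apply G2; intro m; left; apply term_pos; auto).
  split; [exact Hnn|]. split.
  { apply Rle_antisym; [|apply Hnn]. apply Rnot_lt_le. intro Hp.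
    destruct (archimed_cor1 (g 0) Hp) as [N [HN HN0]].
    pose proof (G1 0 N). unfold term in H. rewrite Rabs_R0 in H.
    assert (/ (INR N + 1) < / INR N).
    { apply Rinv_lt_contravar; [|lra]. apply lt_0_INR in HN0. nra. }
    assert (0 / dd N = 0) by (unfold Rdiv; ring). lra. }
  split.
  { intros s s' Hs. apply G2. intro m. eapply Rle_trans; [apply G1|]. apply term_mono; auto. }
  split.
  { intros s s' Hs.
    assert (Hs' : 0 < s') by lra.
    assert (s * g s' / s' <= g s).
    { apply G2. intro m. pose proof (G1 s' m). unfold term in *.
      rewrite !Rabs_pos_eq in * by lra. pose proof (Hdd m). pose proof (pos_INR m).
      assert (Ha : 0 < / (INR m + 1)) by (apply Rinv_0_lt_compat; lra).
      set (a := / (INR m + 1)) in *.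
      assert (s * g s' / s' <= s * (a + s' / dd m) / s').
      { unfold Rdiv. apply Rmult_le_compat_r; [left; apply Rinv_0_lt_compat; lra|].
        apply Rmult_le_compat_l; lra. }
      assert (s * (a + s' / dd m) / s' = a * (s / s') + s / dd m) by (field; lra).
      assert (s / s' <= 1) by (apply (Rmult_le_reg_r s'); [lra|]; unfold Rdiv; rewrite Rmult_assoc, Rinv_l; lra).
      nra. }
    apply (Rmult_le_compat_r s') in H; [|lra].
    replace (s * g s' / s' * s') with (s * g s') in H by (field; lra). lra. }
  intros s e He. apply NNPP. intro Hn. assert (e <= g s); [|lra].
  apply G2. intro m. apply Rnot_lt_le. intro Hlt. apply Hn. exists m. exact Hlt.
Qed.

Lemma g_cont (dd : nat -> R) (Hdd : forall m, 0 < dd m) (g : R -> R)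
  (G1 : forall s m, g s <= term dd m s)
  (Gnn : forall s, 0 <= g s) (G0 : g 0 = 0)
  (Gm : forall s s', 0 <= s <= s' -> g s <= g s')
  (Gs : forall s s', 0 < s <= s' -> s * g s' <= s' * g s) :
  forall t, 0 <= t -> forall eps, 0 < eps -> exists d, 0 < d /\
    forall s, 0 <= s -> Rabs (s - t) < d -> Rabs (g s - g t) < eps.
Proof.
  intros t Ht eps He. destruct (Req_dec t 0) as [->|Ht0].
  - destruct (archimed_cor1 (eps/2) ltac:(lra)) as [N [HN HN0]].
    pose proof (Hdd N) as HdN.
    exists (eps / 2 * dd N). split; [apply Rmult_lt_0_compat; lra|].
    intros s Hs Hst. rewrite Rminus_0_r, Rabs_pos_eq in Hst by lra.
    rewrite G0, Rminus_0_r, Rabs_pos_eq by apply Gnn.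
    pose proof (G1 s N). unfold term in H. rewrite Rabs_pos_eq in H by lra.
    assert (/ (INR N + 1) < / INR N).
    { apply Rinv_lt_contravar; [|lra]. apply lt_0_INR in HN0. nra. }
    assert (s / dd N < eps / 2).
    { apply (Rmult_lt_reg_r (dd N)); [lra|]. unfold Rdiv.
      rewrite Rmult_assoc, Rinv_l by lra. lra. }
    lra.
  - assert (Htp : 0 < t) by lra.
    pose proof (Gnn t) as Hgt.
    set (d := eps * t / (g t + 1)).
    assert (Hd : 0 < d) by (unfold d; apply Rdiv_lt_0_compat; nra).
    exists d. split; [exact Hd|]. intros s Hs Hst.
    assert (Hk : t * Rabs (g s - g t) <= Rabs (s - t) * g t).
    { destruct (Rle_dec t s) as [Hts|Hts].
      - pose proof (Gs t s (conj Htp Hts)). pose proof (Gm t s (conj Ht Hts)).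
        rewrite (Rabs_pos_eq (g s - g t)) by lra. rewrite (Rabs_pos_eq (s - t)) by lra.
        replace (t * (g s - g t)) with (t * g s - t * g t) by ring.
        replace ((s - t) * g t) with (s * g t - t * g t) by ring. lra.
      - assert (s <= t) by lra. pose proof (Gm s t (conj Hs H)).
        rewrite (Rabs_left1 (g s - g t)) by lra. rewrite (Rabs_left1 (s - t)) by lra.
        destruct (Req_dec s 0) as [->|Hs0].
        + rewrite G0. nra.
        + assert (Hsp : 0 < s) by (destruct (Rle_lt_or_eq_dec 0 s Hs) as [?|Hq]; [lra|symmetry in Hq; contradiction]). pose proof (Gs s t (conj Hsp H)).
          replace (t * - (g s - g t)) with (t * g t - t * g s) by ring.
          replace (- (s - t) * g t) with (t * g t - s * g t) by ring. lra. }
    assert (Hdg : d * g t < eps * t).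
    { unfold d. replace (eps * t / (g t + 1) * g t) with (eps * t * (g t / (g t + 1))) by (field; lra).
      assert (g t / (g t + 1) < 1).
      { apply (Rmult_lt_reg_r (g t + 1)); [lra|]. unfold Rdiv.
        rewrite Rmult_assoc, Rinv_l by lra. lra. }
      assert (0 < eps * t) by nra. nra. }
    assert (Rabs (s - t) * g t <= d * g t) by (apply Rmult_le_compat_r; lra).
    assert (t * Rabs (g s - g t) < t * eps) by lra.
    apply Rmult_lt_reg_l in H0; lra.
Qed.

Lemma kappa_Kinf (g : R -> R)
  (Gc : forall t, 0 <= t -> forall eps, 0 < eps -> exists d, 0 < d /\
    forall s, 0 <= s -> Rabs (s - t) < d -> Rabs (g s - g t) < eps)
  (Gnn : forall s, 0 <= g s) (G0 : g 0 = 0)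
  (Gm : forall s s', 0 <= s <= s' -> g s <= g s') :
  class_Kinf (fun s => Rabs s + g s).
Proof.
  split; [split; [|split]|].
  - intros t Ht eps He. destruct (Gc t Ht (eps/2) ltac:(lra)) as [d [Hd H]].
    exists (Rmin (eps/2) d). split; [apply Rmin_glb_lt; lra|].
    intros s Hs Hst. pose proof (Rmin_l (eps/2) d). pose proof (Rmin_r (eps/2) d).
    specialize (H s Hs ltac:(lra)).
    rewrite (Rabs_pos_eq s), (Rabs_pos_eq t) by lra.
    replace (s + g s - (t + g t)) with ((s - t) + (g s - g t)) by ring.
    eapply Rle_lt_trans; [apply Rabs_triang|]. lra.
  - intros s t Hs Hst. rewrite !Rabs_pos_eq by lra. pose proof (Gm s t ltac:(lra)). lra.
  - rewrite Rabs_R0, G0. ring.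
  - intro M. exists (Rabs M + 1). split; [pose proof (Rabs_pos M); lra|].
    rewrite (Rabs_pos_eq (Rabs M + 1)) by (pose proof (Rabs_pos M); lra).
    pose proof (Gnn (Rabs M + 1)). pose proof (Rle_abs M). lra.
Qed.

Theorem mainTheorem2 (X U Uc : NormedSpace) (ev : Uc -> R -> U)
    (phi : R -> X -> Uc -> X) :
  Banach X -> Banach U -> input_space ev -> control_system ev phi ->
  CEP phi -> norm_to_integral_ISS phi -> ULS phi.
Proof.
  intros _ _ [_ [SI _]] [Hid [_ [Hcont Hcoc]]] [_ Hcep] Hiss.
  pose proof (stability ev phi SI Hcont Hid Hcoc Hcep Hiss) as Stab.
  assert (Hd : forall m : nat, {d | 0 < d /\ forall t x u, 0 <= t ->
    vnorm x <= d -> vnorm u <= d -> vnorm (phi t x u) <= / (INR m + 1)}).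
  { intro m. apply constructive_indefinite_description. apply Stab.
    apply Rinv_0_lt_compat. pose proof (pos_INR m). lra. }
  set (dd := fun m => proj1_sig (Hd m)).
  assert (Hdd : forall m, 0 < dd m) by (intro m; exact (proj1 (proj2_sig (Hd m)))).
  destruct (inf_fun dd Hdd) as [g [G1 G2]].
  destruct (g_props dd Hdd g G1 G2) as [Gnn [G0 [Gm [Gs G3]]]].
  pose proof (g_cont dd Hdd g G1 Gnn G0 Gm Gs) as Gc.
  pose proof (kappa_Kinf g Gc Gnn G0 Gm) as HK.
  destruct (Stab 1 Rlt_0_1) as [r [Hr HB1]].
  exists (fun s => Rabs s + g s), (fun s => Rabs s + g s), r.
  split; [exact HK|]. split; [exact HK|]. split; [exact Hr|].
  intros t x u Ht Hx Hu.
  pose proof (vnorm_nonneg _ x) as Hx0. pose proof (vnorm_nonneg _ u) as Hu0.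
  set (s := Rmax (vnorm x) (vnorm u)).
  assert (Hs0 : 0 <= s) by (unfold s; eapply Rle_trans; [exact Hx0|apply Rmax_l]).
  assert (Hxs : vnorm x <= s) by apply Rmax_l.
  assert (Hus : vnorm u <= s) by apply Rmax_r.
  assert (Hsr : s <= r) by (unfold s; apply Rmax_lub; assumption).
  assert (Hb : vnorm (phi t x u) <= g s).
  { apply Rnot_lt_le; intro Hlt. destruct (G3 s _ Hlt) as [m Hm]. unfold term in Hm.
    rewrite Rabs_pos_eq in Hm by exact Hs0.
    pose proof (Hdd m) as Hdm.
    assert (Hi : 0 < / (INR m + 1)) by (apply Rinv_0_lt_compat; pose proof (pos_INR m); lra).
    destruct (Rle_dec s (dd m)) as [Hle|Hgt].
    - pose proof (proj2 (proj2_sig (Hd m)) t x u Ht ltac:(fold (dd m); lra) ltac:(fold (dd m); lra)).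
      fold (dd m) in H.
      assert (0 <= s / dd m) by (apply Rmult_le_pos; [lra|left; apply Rinv_0_lt_compat; lra]).
      lra.
    - assert (1 < s / dd m).
      { apply (Rmult_lt_reg_r (dd m)); [lra|]. unfold Rdiv.
        rewrite Rmult_assoc, Rinv_l by lra. lra. }
      pose proof (HB1 t x u Ht ltac:(lra) ltac:(lra)). lra. }
  assert (Hgx := Gnn (vnorm x)). assert (Hgu := Gnn (vnorm u)).
  pose proof (Rabs_pos (vnorm x)). pose proof (Rabs_pos (vnorm u)).
  unfold s in Hb. unfold Rmax in Hb. destruct (Rle_dec (vnorm x) (vnorm u)).
  - rewrite (Rabs_pos_eq (vnorm u)) by lra. lra.
  - rewrite (Rabs_pos_eq (vnorm x)) by lra. lra.
Qed.
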